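(* Let $p\ge2$ be a fixed integer and let $\lambda,\mu$ be integral partitions all of whose entries are powers $p^i$ ($i\ge0$) of $p$. Then $\lambda\hookrightarrow\mu$ if and only if $\lambda\preccurlyeq_S\mu$.
   Context: An integral partition is a finite nonincreasing sequence of positive integers. $\lambda=[\lambda_1,\ldots,\lambda_m]$ embeds into $\mu=[\mu_1,\ldots,\mu_n]$, written $\lambda\hookrightarrow\mu$, if there is a map $\varphi:\{1,\ldots,m\}\to\{1,\ldots,n\}$ with $\sum_{i\in\varphi^{-1}(j)}\lambda_i\le\mu_j$ for all $j$. $\lambda\preccurlyeq_S\mu$ ($\mu$ supermajorizes $\lambda$) means: for every $x\in\mathbb N$, $\sum_{\lambda_i\ge x}\lambda_i\le\sum_{\mu_j\ge x}\mu_j$. *)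

(* Defs.v *)
From mathcomp Require Import all_boot.
Set Implicit Arguments. Unset Strict Implicit. Unset Printing Implicit Defensive.

Definition is_partition (l : seq nat) : bool :=
  sorted geq l && all (fun x => 0 < x) l.

Definition embeds (lam mu : seq nat) : Prop :=
  exists phi : 'I_(size lam) -> 'I_(size mu),
    forall j : 'I_(size mu),
      \sum_(i < size lam | phi i == j) nth 0 lam i <= nth 0 mu j.

Definition supermajorized (lam mu : seq nat) : Prop :=
  forall x : nat,
    \sum_(a <- lam | x <= a) a <= \sum_(b <- mu | x <= b) b.

Definition all_powers_of (p : nat) (l : seq nat) : Prop :=
  forall a, a \in l -> exists i : nat, a = p ^ i.

(* Main.v *)
Require Import Defs.
From mathcomp Require Import all_boot.
From mathcomp Require Import zify.

Lemma fwd lam mu : embeds lam mu -> supermajorized lam mu.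
Proof.
case=> phi Hphi x.
rewrite [X in X <= _](big_nth 0) [X in _ <= X](big_nth 0) !big_mkord.
rewrite (partition_big phi (fun j : 'I_(size mu) => x <= nth 0 mu j)) /=.
- apply: leq_sum => j Hj; apply: leq_trans (Hphi j).
  rewrite [X in X <= _]big_mkcond [X in _ <= X]big_mkcond /=.
  apply: leq_sum => i _.
  by case: (x <= _); case: (phi i == j).
- move=> i Hi; apply: leq_trans Hi _; apply: leq_trans (Hphi (phi i)).
  by rewrite (bigD1 i) //= leq_addr.
Qed.

Definition E (lam mu : seq nat) := exists f : nat -> nat,
  (forall i, i < size lam -> f i < size mu) /\
  forall j, j < size mu -> \sum_(i < size lam | f i == j) nth 0 lam i <= nth 0 mu j.

Lemma E_embeds lam mu : E lam mu -> embeds lam mu.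
Proof.
case=> f [Hf Hs]; exists (fun i : 'I_(size lam) => Ordinal (Hf i (ltn_ord i))) => j.
apply: leq_trans (Hs j (ltn_ord j)).
by rewrite leq_eqVlt; apply/orP; left; apply/eqP; apply: eq_bigl => i.
Qed.

Lemma E_step a l mu j : j < size mu -> a <= nth 0 mu j ->
  E l (set_nth 0 mu j (nth 0 mu j - a)) -> E (a :: l) mu.
Proof.
move=> Hj Ha [f [Hf Hs]].
have Hsz : size (set_nth 0 mu j (nth 0 mu j - a)) = size mu.
  by rewrite size_set_nth; apply/maxn_idPr.
exists (fun i => if i is i'.+1 then f i' else j); split.
  by case=> [|i] //= Hi; rewrite -Hsz; apply: Hf.
move=> k Hk; rewrite big_mkcond big_ord_recl /=.
have -> : \sum_(i < size l) (if f (lift ord0 i).-1 == k then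
     nth 0 l (lift ord0 i).-1 else 0) = \sum_(i < size l | f i == k) nth 0 l i.
  by rewrite [RHS]big_mkcond; apply: eq_bigr => i _; rewrite lift0.
have := Hs k; rewrite Hsz => /(_ Hk); rewrite nth_set_nth /=.
case: (eqVneq k j) => [->|ne]; first by rewrite ?eqxx; lia.
by rewrite add0n.
Qed.

Lemma back : forall l mu, sorted geq l -> all (fun x => 0 < x) l ->
  (forall a b, a \in l -> b \in l -> b <= a -> b %| a) ->
  (forall b m, b \in l -> m \in mu -> (m < b) \/ (b %| m)) ->
  supermajorized l mu -> E l mu.
Proof.
elim=> [|a l IH] mu Hsort Hpos Hch HI Hsup.
  by exists (fun _ => 0); split => // j _; rewrite big_ord0.
have Ha0 : 0 < a by case/andP: Hpos.
have Hle : forall b, b \in l -> b <= a.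
  move=> b hb.
  have := order_path_min (fun y x z (h1 : geq x y) (h2 : geq y z) => leq_trans h2 h1) Hsort.
  by move/allP => /(_ b hb).
have Hhas : has (fun m => a <= m) mu.
  apply/negPn/negP => Hn.
  have H0 : \sum_(b <- mu | a <= b) b = 0.
    apply: big1_seq => b /andP [h1 h2].
    by move/hasPn: Hn => /(_ b h2); rewrite h1.
  have := Hsup a; rewrite big_cons leqnn H0; lia.
set j := find (fun m => a <= m) mu.
have Hj : j < size mu by rewrite -has_find.
have Haj : a <= nth 0 mu j := nth_find 0 Hhas.
have Hmmu : nth 0 mu j \in mu := mem_nth 0 Hj.
set m := nth 0 mu j in Haj Hmmu *.
have Hdiv : forall b, b \in l -> b %| m - a.
  move=> b hb; apply: dvdn_sub.
    case: (HI b m _ Hmmu) => //; first by rewrite inE hb orbT.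
    by have := Hle b hb; lia.
  by apply: Hch; rewrite ?inE ?hb ?eqxx ?orbT //; apply: Hle.
apply: (@E_step a l mu j Hj Haj); apply: IH.
- exact: path_sorted Hsort.
- by case/andP: Hpos.
- by move=> x y hx hy; apply: Hch; rewrite inE ?hx ?hy orbT.
- move=> b x hb; rewrite set_nthE Hj mem_cat inE.
  case/orP => [/mem_take h|/orP [/eqP ->|/mem_drop h]].
  + by apply: HI; rewrite ?inE ?hb ?orbT.
  + by case: (ltnP (m - a) b) => h; [left | right; apply: Hdiv].
  + by apply: HI; rewrite ?inE ?hb ?orbT.
- move=> x; rewrite set_nthE Hj.
  have Hmu := Hsup x; rewrite big_cons in Hmu.
  rewrite -(cat_take_drop j mu) (drop_nth 0 Hj) big_cat big_cons -/m in Hmu.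
  simpl in Hmu.
  rewrite big_cat big_cons /= -/m.
  case: (leqP x a) => hxa.
  + have hxm : x <= m by apply: leq_trans Haj.
    rewrite hxa hxm in Hmu.
    case: (leqP x (m - a)) => h2; first lia.
    case: (posnP (m - a)) => h3; first lia.
    have -> : \sum_(b <- l | x <= b) b = 0; last by [].
    apply: big1_seq => b /andP [hb1 hb2].
    have := dvdn_leq h3 (Hdiv b hb2); lia.
  + have -> : \sum_(b <- l | x <= b) b = 0; last by [].
    apply: big1_seq => b /andP [hb1 hb2].
    have := Hle b hb2; lia.
Qed.

Theorem theorem3p2 (p : nat) (lam mu : seq nat) :
  2 <= p ->
  is_partition lam -> is_partition mu ->
  all_powers_of p lam -> all_powers_of p mu ->
  (embeds lam mu <-> supermajorized lam mu).
Proof.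
move=> Hp /andP [Hs Hpos] _ Hl Hm; split; first exact: fwd.
move=> H; apply: E_embeds; apply: back => //.
- move=> a b ha hb hba.
  case: (Hl a ha) => i Hi; case: (Hl b hb) => k Hk; rewrite Hi Hk in hba *.
  by apply: dvdn_exp2l; rewrite -(leq_exp2l _ _ Hp).
- move=> b x hb hx.
  case: (Hl b hb) => i Hi; case: (Hm x hx) => k Hk; rewrite Hi Hk.
  case: (ltnP (p ^ k) (p ^ i)) => h; [by left | right].
  by apply: dvdn_exp2l; rewrite -(leq_exp2l _ _ Hp).
Qed.
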